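(* Fix parameters $\gamma\in(0,1)$, $a\in(1,1/\gamma)$ and $\kappa\in(0,1]$. For large $T$, with $N=[T^{\kappa}]$ and with $f$, $\mathcal{M}$, $R$, $\Phi$ as defined in the context, \[ \int_{-\infty}^{\infty}|R(t)|^2\,\Phi\Big(\frac tT\Big)\,dt \ll T\sum_{n\in\mathcal{M}}f(n)^2, \] with an implied constant independent of $T$.
   Context: Write $\log_2x=\log\log x$, $\log_3 x=\log\log\log x$, and $\Phi(t):=e^{-t^2/2}$. Let $P$ be the set of primes $p$ with $e\log N\log_2N<p\le \log N\exp((\log_2N)^{\gamma})\log_2N$. Let $f$ be the multiplicative function supported on squarefree integers with $f(p)=\sqrt{\frac{\log N\log_2N}{\log_3N}}\cdot\frac{1}{\sqrt p(\log p-\log_2N-\log_3N)}$ for $p\in P$ and $f(p)=0$ for primes $p\notin P$. For $k=1,\dots,[(\log_2N)^{\gamma}]$ let $P_k$ be the set of primes with $e^k\log N\log_2N<p\le e^{k+1}\log N\log_2N$ and $M_k$ the set of integers having at least $\frac{a\log N}{k^2\log_3N}$ prime divisors in $P_k$; set $\mathcal{M}:=\operatorname{supp}(f)\setminus\bigcup_kM_k$. Let $\mathcal{J}$ be the set of integers $j$ such that $[(1+T^{-1})^j,(1+T^{-1})^{j+1})\cap\mathcal{M}\neq\emptyset$, let $m_j$ be the minimum of this intersection, $\mathcal{M}':=\{m_j:j\in\mathcal{J}\}$, and $r(m_j):=\big(\sum_{n\in\mathcal{M},\,(1+T^{-1})^{j-1}\le n\le(1+T^{-1})^{j+2}}f(n)^2\big)^{1/2}$.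 Finally $R(t):=\sum_{m\in\mathcal{M}'}r(m)m^{-it}$. *)

(* Defs.v *)
From Stdlib Require Import Reals Lra Lia ZArith Arith List Znumtheory ClassicalEpsilon.
From Coquelicot Require Import Coquelicot.
Import ListNotations.
Open Scope R_scope.

Definition dec (P : Prop) : bool :=
  if excluded_middle_informative P then true else false.
Definition ind (P : Prop) : R := if excluded_middle_informative P then 1 else 0.

Definition isprime (p : nat) : Prop := prime (Z.of_nat p).

(* log N, log_2 N = log log N, log_3 N = log log log N *)
Definition L1 (N : nat) : R := ln (INR N).
Definition L2 (N : nat) : R := ln (ln (INR N)).
Definition L3 (N : nat) : R := ln (ln (ln (INR N))).

Definition Nof (kappa T : R) : nat := Z.to_nat (Int_part (Rpower T kappa)).

Definition Uend (gamma : R) (N : nat) : R :=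
  L1 N * exp (Rpower (L2 N) gamma) * L2 N.

Definition inP (gamma : R) (N : nat) (p : nat) : Prop :=
  isprime p /\ exp 1 * L1 N * L2 N < INR p /\ INR p <= Uend gamma N.

Definition fp (gamma : R) (N : nat) (p : nat) : R :=
  if excluded_middle_informative (inP gamma N p) then
    sqrt (L1 N * L2 N / L3 N) / (sqrt (INR p) * (ln (INR p) - L2 N - L3 N))
  else 0.

Definition squarefree (n : nat) : Prop :=
  forall p, isprime p -> ~ Nat.divide (p * p) n.

Definition prime_divs (n : nat) : list nat :=
  filter (fun p => andb (dec (isprime p)) (Nat.eqb (n mod p) 0)) (seq 1 n).

(* f: the multiplicative function supported on squarefree integers with
   f(p) = fp p (fp vanishes off P); f(n) = prod_{p | n} f(p) for squarefree n >= 1. *)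
Definition fM (gamma : R) (N : nat) (n : nat) : R :=
  if Nat.eqb n 0 then 0 else
  if dec (squarefree n) then fold_right Rmult 1 (map (fp gamma N) (prime_divs n))
  else 0.

Definition Kmax (gamma : R) (N : nat) : nat := Z.to_nat (Int_part (Rpower (L2 N) gamma)).

Definition inPk (N k p : nat) : Prop :=
  isprime p /\ exp (INR k) * L1 N * L2 N < INR p /\
  INR p <= exp (INR k + 1) * L1 N * L2 N.

Definition cntPk (N k n : nat) : nat :=
  length (filter (fun p => dec (inPk N k p)) (prime_divs n)).

Definition inMk (a : R) (N k n : nat) : Prop :=
  INR (cntPk N k n) >= a * L1 N / (INR k ^ 2 * L3 N).

Definition inM (gamma a : R) (N n : nat) : Prop :=
  fM gamma N n <> 0 /\
  forall k : nat, (1 <= k <= Kmax gamma N)%nat -> ~ inMk a N k n.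

(* Every element of supp(f) is a product of distinct primes <= Uend, hence
   is <= (ceil Uend)!; all finite sums over calM are taken over n = 0..Bnd. *)
Definition Bnd (gamma : R) (N : nat) : nat := fact (Z.to_nat (up (Uend gamma N))).

Definition sumM (gamma a : R) (N : nat) (g : nat -> R) : R :=
  sum_f_R0 (fun n => ind (inM gamma a N n) * g n) (Bnd gamma N).

Definition qT (T : R) : R := 1 + / T.
Definition in_block (T : R) (j : Z) (n : nat) : Prop :=
  powerRZ (qT T) j <= INR n < powerRZ (qT T) (j + 1).

Definition inM' (gamma a : R) (N : nat) (T : R) (m : nat) : Prop :=
  inM gamma a N m /\
  exists j : Z, in_block T j m /\
    forall n, inM gamma a N n -> in_block T j n -> (m <= n)%nat.

Definition rr (gamma a : R) (N : nat) (T : R) (m : nat) : R :=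
  sqrt (sumM gamma a N (fun n =>
     ind (exists j : Z, in_block T j m /\
            powerRZ (qT T) (j - 1) <= INR n <= powerRZ (qT T) (j + 2))
     * fM gamma N n ^ 2)).

Definition mpow (m : nat) (t : R) : C :=
  (cos (t * ln (INR m)), - sin (t * ln (INR m)))%R.

Definition Rsum (gamma a : R) (N : nat) (T : R) (t : R) : C :=
  sum_n (fun m => Cmult (RtoC (ind (inM' gamma a N T m) * rr gamma a N T m)) (mpow m t))
        (Bnd gamma N).

Definition Phi (t : R) : R := exp (- t ^ 2 / 2).

Definition integrand (gamma a kappa T : R) (t : R) : R :=
  (Cmod (Rsum gamma a (Nof kappa T) T t)) ^ 2 * Phi (t / T).

(* Main.v *)
Require Import Defs.
From Stdlib Require Import Reals.
From Coquelicot Require Import Coquelicot.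
From Stdlib Require Import Lra Lia ZArith Arith List Znumtheory ClassicalEpsilon Classical.
Import Defs.
Open Scope R_scope.

Lemma mono_lim (h : R -> R) (M : R) :
  (forall a b, ex_RInt h a b) -> (forall t, 0 <= h t) ->
  (forall a b, a <= b -> RInt h a b <= M) ->
  exists I, is_RInt_gen h (Rbar_locally m_infty) (Rbar_locally p_infty) I /\ I <= M.
Proof.
  intros hex hpos hb.
  set (E := fun y => exists a b, a <= b /\ y = RInt h a b).
  assert (bE : bound E) by (exists M; intros y [a [b [hab ->]]]; auto).
  assert (nE : exists y, E y) by (exists (RInt h 0 0); exists 0, 0; split; [lra|auto]).
  destruct (completeness E bE nE) as [I [Iub Ilub]].
  exists I; split.
  2: { apply Ilub. intros y [a [b [hab ->]]]; auto. }
  intros P [eps Heps].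
  assert (exists a0 b0, a0 <= b0 /\ I - eps < RInt h a0 b0) as [a0 [b0 [hab0 hgt]]].
  { apply NNPP; intro hn.
    assert (I <= I - eps).
    { apply Ilub. intros y [a [b [hab ->]]].
      apply Rnot_lt_le; intro hl; apply hn; exists a, b; auto. }
    destruct eps; simpl in *; lra. }
  apply Filter_prod with (fun a => a < a0) (fun b => b0 < b).
  - exists a0; auto.
  - exists b0; auto.
  - intros a b ha hb'. exists (RInt h a b). split. exact (RInt_correct h a b (hex a b)).
    apply Heps.
    assert (e1 : RInt h a b <= I) by (apply Iub; exists a, b; split; [lra|auto]).
    assert (e2 : RInt h a0 b0 <= RInt h a b).
    { rewrite <- (RInt_Chasles h a a0 b (hex _ _) (hex _ _)).
      rewrite <- (RInt_Chasles h a0 b0 b (hex _ _) (hex _ _)).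
      assert (0 <= RInt h a a0) by (apply RInt_ge_0; auto; lra).
      assert (0 <= RInt h b0 b) by (apply RInt_ge_0; auto; lra).
      change (RInt h a0 b0 <= RInt h a a0 + (RInt h a0 b0 + RInt h b0 b)). lra. }
    change (Rabs (RInt h a b - I) < eps).
    apply Rabs_def1; lra.
Qed.

Lemma Phi_bd u : (1 + u^2) * (1 + u^2) * Phi u <= 16.
Proof.
  unfold Phi. set (w := u^2/2).
  assert (hw : 0 <= w) by (unfold w; nra).
  replace (- u ^ 2 / 2) with (- w) by (unfold w; field).
  rewrite exp_Ropp.
  assert (e1 : 1 + w/2 <= exp (w/2)) by apply exp_ineq1_le.
  assert (e2 : exp w = exp (w/2) * exp (w/2)) by (rewrite <- exp_plus; f_equal; field).
  assert (e3 : (1 + w/2) * (1 + w/2) <= exp w) by (rewrite e2; apply Rmult_le_compat; lra).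
  assert (e4 : (1+u^2)*(1+u^2) <= 16 * ((1 + w/2) * (1 + w/2))) by (unfold w; nra).
  assert (0 < exp w) by apply exp_pos.
  apply (Rmult_le_reg_r (exp w)); auto.
  rewrite Rmult_assoc, Rinv_l by lra. nra.
Qed.

Lemma Phi_pos u : 0 < Phi u.
Proof. unfold Phi; apply exp_pos. Qed.

Lemma Phi_le16 u : Phi u <= 16 / (1 + u^2).
Proof.
  pose proof (Phi_bd u). pose proof (Phi_pos u).
  assert (0 < 1 + u^2) by nra.
  apply (Rmult_le_reg_r (1+u^2)); auto. assert (16/(1+u^2)*(1+u^2) = 16) by (field; lra). nra.
Qed.

Lemma Phi_le16b u : (1 + u^2) * Phi u <= 16 / (1 + u^2).
Proof.
  pose proof (Phi_bd u). pose proof (Phi_pos u).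
  assert (0 < 1 + u^2) by nra.
  apply (Rmult_le_reg_r (1+u^2)); auto. assert (16/(1+u^2)*(1+u^2) = 16) by (field; lra). nra.
Qed.

Lemma Phi_even u : Phi (- u) = Phi u.
Proof. unfold Phi. replace ((-u)^2) with (u^2) by ring. reflexivity. Qed.

Lemma int_F16 T A : 0 < T ->
  is_RInt (fun t => 16 / (1 + (t/T)^2)) (-A) A (16*T*(atan (A/T) - atan (-A/T))).
Proof.
  intros hT.
  assert (hd : forall t, is_derive (fun t => 16*T*atan (t/T)) t (16 / (1 + (t/T)^2))).
  { intros t.
    assert (h1 : is_derive (fun t => t / T) t (/T)).
    { auto_derive. lra. ring. }
    pose proof (is_derive_comp atan (fun t => t/T) t _ _ (is_derive_atan (t/T)) h1) as h2.
    pose proof (is_derive_scal (fun x => atan (x/T)) t (16*T) _ h2) as h3.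
    replace (16 / (1 + (t/T)^2)) with (16*T * (/T * /(1 + (t/T)²))).
    exact h3.
    unfold Rsqr. field. split; [lra|nra]. }
  replace (16 * T * (atan (A / T) - atan (- A / T))) with (minus (16*T*atan (A/T)) (16*T*atan (-A/T))).
  apply (is_RInt_derive (fun t => 16*T*atan (t/T))).
  intros; apply hd.
  intros x _. apply (ex_derive_continuous (K:=R_AbsRing) (V:=R_NormedModule) (fun t => 16 / (1 + (t/T)^2))). auto_derive. nra.
  unfold minus, plus, opp; simpl. change (16 * T * atan (A / T) + - (16 * T * atan (- A / T)) = 16 * T * (atan (A / T) - atan (- A / T))). ring.
Qed.

Definition gk (T x t : R) := cos (x*t) * Phi (t/T).

Lemma gk_cont T x t : 0 < T -> continuous (gk T x) t.
Proof.
  intros hT. apply (ex_derive_continuous (K:=R_AbsRing) (V:=R_NormedModule) (gk T x)).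
  unfold gk, Phi. auto_derive. lra.
Qed.

Lemma gk_ex T x a b : 0 < T -> ex_RInt (gk T x) a b.
Proof. intros hT; apply (ex_RInt_continuous (V:=R_CompleteNormedModule)); intros; apply gk_cont; auto. Qed.

Lemma normR (y : R) : norm y = Rabs y.
Proof. reflexivity. Qed.

Lemma int_triv T x A : 0 < T -> 0 <= A -> Rabs (RInt (gk T x) (-A) A) <= 16*PI*T.
Proof.
  intros hT hA.
  pose proof (norm_RInt_le (gk T x) (fun t => 16 / (1 + (t/T)^2)) (-A) A (RInt (gk T x) (-A) A) (16*T*(atan (A/T) - atan (-A/T))) ltac:(lra)) as H.
  rewrite normR in H.
  eapply Rle_trans. apply H.
  - intros t _. rewrite normR. unfold gk. rewrite Rabs_mult.
    pose proof (COS_bound (x*t)). pose proof (Phi_le16 (t/T)). pose proof (Phi_pos (t/T)).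
    rewrite (Rabs_pos_eq (Phi _)) by lra.
    assert (Rabs (cos (x*t)) <= 1) by (apply Rabs_le; lra).
    assert (0 <= Rabs (cos (x*t))) by apply Rabs_pos.
    nra.
  - apply (RInt_correct (V:=R_CompleteNormedModule)), gk_ex; auto.
  - apply int_F16; auto.
  - pose proof (atan_bound (A/T)). pose proof (atan_bound (-A/T)). nra.
Qed.

Lemma sq_pos x : x <> 0 -> 0 < x^2.
Proof. intros h; destruct (Rtotal_order x 0) as [h'|[h'|h']]; [nra|contradiction|nra]. Qed.

Lemma absG T x t : 0 < T -> x <> 0 ->
  Rabs ((sin (x*t)/x - cos (x*t)*t/(T^2*x^2)) * Phi (t/T)) <= (/Rabs x + Rabs t/(T^2*x^2)) * Phi (t/T).
Proof.
  intros hT hx. pose proof (Phi_pos (t/T)).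
  rewrite Rabs_mult, (Rabs_pos_eq (Phi _)) by lra.
  apply Rmult_le_compat_r; [lra|].
  eapply Rle_trans; [apply Rabs_triang|]. rewrite Rabs_Ropp.
  assert (hx2 : 0 < T^2*x^2) by (pose proof (sq_pos x hx); apply Rmult_lt_0_compat; nra).
  apply Rplus_le_compat.
  - unfold Rdiv. rewrite Rabs_mult, Rabs_inv.
    pose proof (SIN_bound (x*t)). assert (Rabs (sin (x*t)) <= 1) by (apply Rabs_le; lra).
    pose proof (Rabs_pos (sin (x*t))). assert (0 < / Rabs x) by (apply Rinv_0_lt_compat, Rabs_pos_lt; auto).
    nra.
  - unfold Rdiv. rewrite !Rabs_mult, (Rabs_pos_eq (/ _)) by (left; apply Rinv_0_lt_compat; auto).
    pose proof (COS_bound (x*t)). assert (Rabs (cos (x*t)) <= 1) by (apply Rabs_le; lra).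
    pose proof (Rabs_pos (cos (x*t))). pose proof (Rabs_pos t).
    assert (0 < / (T^2*x^2)) by (apply Rinv_0_lt_compat; auto).
    assert (0 <= Rabs t * / (T^2*x^2)) by (apply Rmult_le_pos; lra). nra.
Qed.

Lemma int_ibp T x A : 0 < T -> 0 <= A -> x <> 0 ->
  Rabs (RInt (gk T x) (-A) A) <= 16*PI/(T*x^2) + 2*((/Rabs x + A/(T^2*x^2)) * Phi (A/T)).
Proof.
  intros hT hA hx.
  assert (hx2 : 0 < x^2) by (apply sq_pos; auto).
  assert (hTx : 0 < T^2*x^2) by (apply Rmult_lt_0_compat; nra).
  set (G := fun t => (sin (x*t)/x - cos (x*t)*t/(T^2*x^2)) * Phi (t/T)).
  set (k := fun t => ((t/T)^2 - 1)/(T^2*x^2)).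
  assert (H1 : is_RInt (fun t => gk T x t * (1 + k t)) (-A) A (minus (G A) (G (-A)))).
  { apply (is_RInt_derive (V:=R_CompleteNormedModule) G).
    - intros t _. unfold G, gk, k, Phi. auto_derive. repeat split; lra.
      assert (e: exp (- (t * / T * (t * / T * 1)) * / 2) = exp (- (t / T) ^ 2 / 2)) by (f_equal; field; lra). rewrite e. field. split; lra.
    - intros t _. apply (ex_derive_continuous (K:=R_AbsRing) (V:=R_NormedModule)).
      unfold gk, k, Phi. auto_derive. split; lra. }
  set (J := RInt (fun t => gk T x t * k t) (-A) A).
  assert (H2 : is_RInt (fun t => gk T x t * k t) (-A) A J).
  { apply (RInt_correct (V:=R_CompleteNormedModule)).
    apply (ex_RInt_continuous (V:=R_CompleteNormedModule)). intros t _.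
    apply (ex_derive_continuous (K:=R_AbsRing) (V:=R_NormedModule)).
    unfold gk, k, Phi. auto_derive. split; lra. }
  pose proof (is_RInt_minus _ _ _ _ _ _ H1 H2) as H3.
  assert (H4 : is_RInt (gk T x) (-A) A (minus (minus (G A) (G (-A))) J)).
  { eapply is_RInt_ext; [|exact H3]. intros t _. unfold minus, plus, opp; simpl.
    change (gk T x t * (1 + k t) + - (gk T x t * k t) = gk T x t). ring. }
  rewrite (is_RInt_unique _ _ _ _ H4).
  assert (HJ : Rabs J <= 16*PI/(T*x^2)).
  { pose proof (is_RInt_scal _ _ _ (/(T^2*x^2)) _ (int_F16 T A hT)) as HF.
    pose proof (norm_RInt_le (fun t => gk T x t * k t) (fun t => scal (/(T^2*x^2)) (16 / (1 + (t/T)^2))) (-A) A J (scal (/ (T ^ 2 * x ^ 2)) (16 * T * (atan (A / T) - atan (- A / T)))) ltac:(lra)) as H.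
    rewrite normR in H. eapply Rle_trans. apply H; auto.
    - intros t _. rewrite normR. change (scal (/ (T ^ 2 * x ^ 2)) (16 / (1 + (t / T) ^ 2))) with (/ (T ^ 2 * x ^ 2) * (16 / (1 + (t / T) ^ 2))).
      unfold gk, k. rewrite !Rabs_mult.
      unfold Rdiv at 2. rewrite Rabs_mult, (Rabs_pos_eq (/ (T^2*x^2))) by (left; apply Rinv_0_lt_compat; auto).
      pose proof (COS_bound (x*t)). assert (Rabs (cos (x*t)) <= 1) by (apply Rabs_le; lra).
      pose proof (Rabs_pos (cos (x*t))).
      pose proof (Phi_le16b (t/T)). pose proof (Phi_pos (t/T)).
      rewrite (Rabs_pos_eq (Phi _)) by lra.
      assert (Rabs ((t/T)^2 - 1) <= 1 + (t/T)^2) by (apply Rabs_le; nra).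
      pose proof (Rabs_pos ((t/T)^2 - 1)).
      assert (0 < / (T^2*x^2)) by (apply Rinv_0_lt_compat; auto).
      assert (0 <= Rabs (cos (x * t)) * Phi (t / T)) by nra.
      assert (Rabs (cos (x * t)) * Phi (t / T) <= Phi (t/T)) by nra.
      assert (Rabs (cos (x * t)) * Phi (t / T) * Rabs ((t / T) ^ 2 - 1) <= 16 / (1 + (t / T) ^ 2)) by nra.
      nra.
    - change (scal (/ (T ^ 2 * x ^ 2)) (16 * T * (atan (A / T) - atan (- A / T)))) with (/ (T ^ 2 * x ^ 2) * (16 * T * (atan (A / T) - atan (- A / T)))).
      pose proof (atan_bound (A/T)). pose proof (atan_bound (-A/T)).
      replace (16 * PI / (T * x ^ 2)) with (/ (T ^ 2 * x ^ 2) * (16 * T * PI)) by (field; lra).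
      assert (0 < / (T^2*x^2)) by (apply Rinv_0_lt_compat; auto).
      apply Rmult_le_compat_l; nra. }
  assert (HGA : Rabs (G A) <= (/Rabs x + A/(T^2*x^2)) * Phi (A/T)).
  { unfold G. eapply Rle_trans. apply absG; auto. rewrite (Rabs_pos_eq A) by lra. lra. }
  assert (HGB : Rabs (G (-A)) <= (/Rabs x + A/(T^2*x^2)) * Phi (A/T)).
  { unfold G. eapply Rle_trans. apply absG; auto. rewrite Rabs_Ropp, (Rabs_pos_eq A) by lra.
    replace (-A/T) with (-(A/T)) by (field; lra). rewrite Phi_even. lra. }
  unfold minus, plus, opp; simpl.
  change (Rabs (G A + - G (- A) + - J) <= 16 * PI / (T * x ^ 2) + 2 * ((/ Rabs x + A / (T ^ 2 * x ^ 2)) * Phi (A / T))).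
  eapply Rle_trans. apply Rabs_triang. rewrite Rabs_Ropp.
  eapply Rle_trans. apply Rplus_le_compat_r. apply Rabs_triang. rewrite Rabs_Ropp. lra.
Qed.

Lemma ind_ge0 P : 0 <= ind P.
Proof. unfold ind; destruct excluded_middle_informative; lra. Qed.
Lemma ind_le1 P : ind P <= 1.
Proof. unfold ind; destruct excluded_middle_informative; lra. Qed.
Lemma ind_T (P : Prop) : P -> ind P = 1.
Proof. unfold ind; destruct excluded_middle_informative; tauto. Qed.
Lemma ind_F (P : Prop) : ~ P -> ind P = 0.
Proof. unfold ind; destruct excluded_middle_informative; tauto. Qed.
Lemma ind_and P Q : ind P * ind Q = ind (P /\ Q).
Proof. unfold ind; repeat destruct excluded_middle_informative; try tauto; lra. Qed.
Lemma ind_sq P : ind P * ind P = ind P.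
Proof. unfold ind; destruct excluded_middle_informative; lra. Qed.

Lemma sum_swap (u : nat -> nat -> R) n k :
  sum_f_R0 (fun i => sum_f_R0 (u i) k) n = sum_f_R0 (fun j => sum_f_R0 (fun i => u i j) n) k.
Proof.
  transitivity (sum_n (fun i => sum_n (u i) k) n).
  { rewrite sum_n_Reals. apply sum_eq; intros. rewrite sum_n_Reals; auto. }
  rewrite sum_n_switch. rewrite sum_n_Reals. apply sum_eq; intros. rewrite sum_n_Reals; auto.
Qed.

Lemma sum_nonneg (a : nat -> R) n : (forall i, (i <= n)%nat -> 0 <= a i) -> 0 <= sum_f_R0 a n.
Proof.
  induction n; intros h; simpl. apply h; lia.
  apply Rplus_le_le_0_compat. apply IHn; intros; apply h; lia. apply h; lia.
Qed.

Lemma term_le_sum (a : nat -> R) n k : (forall i, (i <= n)%nat -> 0 <= a i) -> (k <= n)%nat -> a k <= sum_f_R0 a n.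
Proof.
  induction n; intros h hk; simpl.
  - replace k with 0%nat by lia; lra.
  - destruct (Nat.eq_dec k (S n)) as [->|hne].
    + pose proof (sum_nonneg a n ltac:(intros; apply h; lia)). lra.
    + pose proof (IHn ltac:(intros; apply h; lia) ltac:(lia)). pose proof (h (S n) (le_n _)). lra.
Qed.

Lemma sum_zero (a : nat -> R) n : (forall i, (i <= n)%nat -> a i = 0) -> sum_f_R0 a n = 0.
Proof.
  induction n; intros h; simpl. apply h; lia. rewrite IHn, h; [lra|lia|]. intros; apply h; lia.
Qed.

Lemma at_most_one B (Q : nat -> Prop) :
  (forall m m', (m <= B)%nat -> (m' <= B)%nat -> Q m -> Q m' -> m = m') ->
  sum_f_R0 (fun m => ind (Q m)) B <= 1.
Proof.
  induction B; intros h; simpl. apply ind_le1.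
  destruct (classic (Q (S B))) as [hq|hq].
  - rewrite sum_zero. rewrite ind_T by auto. lra.
    intros i hi. apply ind_F. intro hqi. pose proof (h i (S B) ltac:(lia) ltac:(lia) hqi hq). lia.
  - rewrite (ind_F _ hq). rewrite Rplus_0_r. apply IHB. intros; apply h; auto; lia.
Qed.

Lemma count_inj B (P : nat -> Prop) (j : nat -> Z) (lo : Z) (L : nat) (g : Z -> R) :
  (forall m, (m <= B)%nat -> P m -> (lo <= j m <= lo + Z.of_nat L)%Z) ->
  (forall m m', (m <= B)%nat -> (m' <= B)%nat -> P m -> P m' -> j m = j m' -> m = m') ->
  (forall k, 0 <= g k) ->
  sum_f_R0 (fun m => ind (P m) * g (j m)) B <= sum_f_R0 (fun i => g (lo + Z.of_nat i)%Z) L.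
Proof.
  intros hr hinj hg.
  apply Rle_trans with (sum_f_R0 (fun m => sum_f_R0 (fun i => ind (P m /\ j m = (lo + Z.of_nat i)%Z) * g (lo + Z.of_nat i)%Z) L) B).
  { apply sum_Rle. intros m hm.
    destruct (classic (P m)) as [hp|hp].
    - set (i0 := Z.to_nat (j m - lo)).
      assert (e : j m = (lo + Z.of_nat i0)%Z) by (unfold i0; pose proof (hr m hm hp); lia).
      eapply Rle_trans; [|apply (term_le_sum _ L i0)].
      + rewrite !ind_T by auto. rewrite <- e. lra.
      + intros; apply Rmult_le_pos; [apply ind_ge0|apply hg].
      + unfold i0; pose proof (hr m hm hp); lia.
    - rewrite ind_F by auto. rewrite Rmult_0_l. apply sum_nonneg.
      intros; apply Rmult_le_pos; [apply ind_ge0|apply hg]. }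
  rewrite sum_swap. apply sum_Rle. intros i hi.
  rewrite <- scal_sum. rewrite <- (Rmult_1_r (g (lo + Z.of_nat i)%Z)) at 2. apply Rmult_le_compat_l; [apply hg|].
  apply at_most_one. intros m m' hm hm' [h1 e1] [h2 e2]. apply hinj; auto; congruence.
Qed.

Lemma schur B (P : nat -> Prop) (c : nat -> R) (K : nat -> nat -> R) S :
  (forall m, ~ P m -> c m = 0) -> (forall m m', 0 <= K m m') -> (forall m m', K m m' = K m' m) ->
  (forall m, (m <= B)%nat -> P m -> sum_f_R0 (fun m' => ind (P m') * K m m') B <= S) ->
  sum_f_R0 (fun m => sum_f_R0 (fun m' => c m * c m' * K m m') B) B <= S * sum_f_R0 (fun m => c m ^ 2) B.
Proof.
  intros hc hK hs hrow.
  set (X := fun m m' => c m ^2 * (ind (P m') * K m m') / 2).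
  apply Rle_trans with (sum_f_R0 (fun m => sum_f_R0 (fun m' => X m m' + X m' m) B) B).
  { apply sum_Rle; intros m _; apply sum_Rle; intros m' _. unfold X. rewrite (hs m' m).
    pose proof (hK m m').
    destruct (classic (P m)) as [h1|h1]; destruct (classic (P m')) as [h2|h2].
    - rewrite !ind_T by auto. pose proof (Rmult_le_pos _ _ (pow2_ge_0 (c m - c m')) (hK m m')). nra.
    - rewrite (hc m') by auto. rewrite (ind_F (P m')) by auto. pose proof (ind_ge0 (P m)). nra.
    - rewrite (hc m) by auto. rewrite (ind_F (P m)) by auto. pose proof (ind_ge0 (P m')). nra.
    - rewrite (hc m), (hc m') by auto. nra. }
  assert (e : sum_f_R0 (fun m => sum_f_R0 (fun m' => X m m' + X m' m) B) B =
              2 * sum_f_R0 (fun m => sum_f_R0 (fun m' => X m m') B) B).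
  { transitivity (sum_f_R0 (fun m => sum_f_R0 (fun m' => X m m') B) B + sum_f_R0 (fun m => sum_f_R0 (fun m' => X m' m) B) B).
    { rewrite <- sum_plus. apply sum_eq; intros. apply sum_plus. }
    rewrite (sum_swap (fun m m' => X m' m)). lra. }
  rewrite e.
  assert (e2 : forall m, sum_f_R0 (fun m' => X m m') B = c m ^ 2 / 2 * sum_f_R0 (fun m' => ind (P m') * K m m') B).
  { intros m. rewrite scal_sum. apply sum_eq; intros. unfold X. field. }
  apply Rle_trans with (2 * sum_f_R0 (fun m => c m ^ 2 / 2 * S) B).
  { apply Rmult_le_compat_l; [lra|]. apply sum_Rle; intros m hm. rewrite e2.
    destruct (classic (P m)) as [h1|h1].
    - apply Rmult_le_compat_l. pose proof (pow2_ge_0 (c m)); lra. apply hrow; auto.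
    - rewrite (hc m h1). lra. }
  rewrite <- scal_sum. right.
  replace (sum_f_R0 (fun i => c i ^ 2 / 2) B) with (/2 * sum_f_R0 (fun i => c i ^ 2) B).
  lra. rewrite scal_sum. apply sum_eq; intros; field.
Qed.

Definition Fz (x : R) := x / (Rabs x + 1).

Lemma inv_cmp x D : 0 < D -> D <= 3 * (1 + x^2) -> 1 / (1 + x^2) <= 3 / D.
Proof.
  intros hD hle. assert (0 < 1 + x^2) by nra.
  unfold Rdiv. apply Rmult_le_reg_r with (D * (1+x^2)). nra.
  replace (1 * / (1 + x ^ 2) * (D * (1 + x ^ 2))) with D by (field; lra).
  replace (3 * / D * (D * (1 + x ^ 2))) with (3 * (1 + x^2)) by (field; lra). lra.
Qed.

Lemma tele_pt (z : Z) : 1 / (1 + IZR z ^ 2) <= 3 * (Fz (IZR z + 1) - Fz (IZR z)).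
Proof.
  unfold Fz.
  destruct (Z_lt_le_dec z 0) as [hz|hz].
  - assert (hx : IZR z <= -1) by (apply IZR_le; lia).
    set (x := IZR z) in *.
    rewrite (Rabs_left x) by lra. rewrite (Rabs_left1 (x+1)) by lra.
    replace (3 * ((x + 1) / (- (x + 1) + 1) - x / (- x + 1))) with (3 / (x * (x - 1))) by (field; lra).
    apply inv_cmp; nra.
  - assert (hx : 0 <= IZR z) by (apply IZR_le; lia).
    assert (hx2 : IZR z = 0 \/ 1 <= IZR z).
    { destruct (Z.eq_dec z 0) as [->|hne]; [left; reflexivity|right; apply IZR_le; lia]. }
    set (x := IZR z) in *.
    rewrite (Rabs_pos_eq x) by lra. rewrite (Rabs_pos_eq (x+1)) by lra.
    replace (3 * ((x + 1) / (x + 1 + 1) - x / (x + 1))) with (3 / ((x + 1) * (x + 2))) by (field; lra).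
    apply inv_cmp. nra. destruct hx2; nra.
Qed.

Lemma Fz_bd x : Rabs (Fz x) < 1.
Proof.
  unfold Fz. pose proof (Rabs_pos x). unfold Rdiv. rewrite Rabs_mult, Rabs_inv, (Rabs_pos_eq (Rabs x + 1)) by lra.
  apply Rmult_lt_reg_r with (Rabs x + 1). lra. rewrite Rmult_assoc, Rinv_l by lra. lra.
Qed.

Lemma tele_sum (a : Z) L : sum_f_R0 (fun i => 1 / (1 + IZR (a + Z.of_nat i) ^ 2)) L <= 6.
Proof.
  apply Rle_trans with (3 * (Fz (IZR a + INR L + 1) - Fz (IZR a))).
  - induction L.
    + simpl. rewrite Z.add_0_r. replace (IZR a + 0 + 1) with (IZR a + 1) by ring. apply tele_pt.
    + rewrite tech5. pose proof (tele_pt (a + Z.of_nat (S L))) as H.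
      rewrite plus_IZR, <- INR_IZR_INZ in H |- *. rewrite S_INR in H |- *.
      replace (IZR a + (INR L + 1)) with (IZR a + INR L + 1) in H |- * by ring. lra.
  - pose proof (Fz_bd (IZR a + INR L + 1)). pose proof (Fz_bd (IZR a)).
    apply Rabs_def2 in H; apply Rabs_def2 in H0. lra.
Qed.

Lemma sum_n_C (f : nat -> C) n :
  sum_n f n = (sum_f_R0 (fun m => fst (f m)) n, sum_f_R0 (fun m => snd (f m)) n).
Proof.
  induction n.
  - rewrite sum_O. simpl. destruct (f 0%nat); reflexivity.
  - rewrite sum_Sn, IHn. simpl. destruct (f (S n)); reflexivity.
Qed.

Lemma prod_sum (a b : nat -> R) n :
  sum_f_R0 a n * sum_f_R0 b n = sum_f_R0 (fun i => sum_f_R0 (fun j => a i * b j) n) n.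
Proof.
  rewrite Rmult_comm, scal_sum. apply sum_eq; intros i _.
  rewrite scal_sum. apply sum_eq; intros; ring.
Qed.

Lemma sum_opp (a : nat -> R) n : sum_f_R0 (fun i => - a i) n = - sum_f_R0 a n.
Proof. induction n; simpl; [|rewrite IHn]; ring. Qed.

Lemma E_gen (c l : nat -> R) B t :
  (Cmod (sum_n (fun m => Cmult (RtoC (c m)) (cos (t * l m), - sin (t * l m))%R) B))^2 =
  sum_f_R0 (fun m => sum_f_R0 (fun m' => c m * c m' * cos ((l m - l m') * t)) B) B.
Proof.
  rewrite sum_n_C. unfold Cmod. simpl fst; simpl snd.
  rewrite pow2_sqrt by nra.
  set (X := sum_f_R0 _ B). set (Y := sum_f_R0 _ B).
  assert (eX : X = sum_f_R0 (fun m => c m * cos (t * l m)) B) by (apply sum_eq; intros; simpl; ring).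
  assert (eY : Y = - sum_f_R0 (fun m => c m * sin (t * l m)) B).
  { unfold Y. rewrite <- sum_opp. apply sum_eq; intros; simpl; ring. }
  rewrite eX, eY. replace ((- sum_f_R0 (fun m => c m * sin (t * l m)) B) ^ 2) with
    (sum_f_R0 (fun m => c m * sin (t * l m)) B * sum_f_R0 (fun m => c m * sin (t * l m)) B) by ring.
  replace ((sum_f_R0 (fun m => c m * cos (t * l m)) B) ^ 2) with
    (sum_f_R0 (fun m => c m * cos (t * l m)) B * sum_f_R0 (fun m => c m * cos (t * l m)) B) by ring.
  rewrite !prod_sum, <- sum_plus. apply sum_eq; intros i _. rewrite <- sum_plus. apply sum_eq; intros j _.
  replace ((l i - l j) * t) with (t * l i - t * l j) by ring. rewrite cos_minus. ring.
Qed.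

Lemma is_RInt_sum (f : nat -> R -> R) (I : nat -> R) a b n :
  (forall i, (i <= n)%nat -> is_RInt (f i) a b (I i)) ->
  is_RInt (fun t => sum_f_R0 (fun i => f i t) n) a b (sum_f_R0 I n).
Proof.
  induction n; intros h.
  - simpl. apply h; lia.
  - simpl. apply (is_RInt_plus (V:=R_NormedModule) (fun t => sum_f_R0 (fun i => f i t) n) (f (S n))).
    apply IHn; intros; apply h; lia. apply h; lia.
Qed.

Definition lq T := ln (qT T).
Definition jb T (m : nat) : Z := Int_part (ln (INR m) / lq T).

Lemma exp_le_inv' x y : exp x <= exp y -> x <= y.
Proof. intros h. destruct (Rle_or_lt x y) as [|h']; auto. pose proof (exp_increasing _ _ h'). lra. Qed.
Lemma exp_lt_inv' x y : exp x < exp y -> x < y.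
Proof. intros h. destruct (Rle_or_lt y x) as [h'|h']; auto.
  destruct h' as [h' | -> ]; [pose proof (exp_increasing _ _ h')|]; lra. Qed.
Lemma ln_le' x y : 0 < x -> x <= y -> ln x <= ln y.
Proof. intros hx [h | -> ]; [left; apply ln_increasing; auto|lra]. Qed.

Lemma lq_lb T : 0 < T -> 1 / (T + 1) <= lq T.
Proof.
  intros hT. unfold lq, qT. pose proof (exp_ineq1_le (- ln (1 + / T))).
  assert (0 < 1 + /T) by (pose proof (Rinv_0_lt_compat T hT); lra).
  rewrite exp_Ropp, exp_ln in H by auto.
  replace (/ (1 + / T)) with (T / (T+1)) in H by (field; lra).
  replace (1 / (T+1)) with (1 - T/(T+1)) by (field; lra). lra.
Qed.

Lemma lq_pos T : 0 < T -> 0 < lq T.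
Proof. intros hT. pose proof (lq_lb T hT). assert (0 < 1/(T+1)) by (apply Rdiv_lt_0_compat; lra). lra. Qed.

Lemma pw T z : 0 < T -> powerRZ (qT T) z = exp (IZR z * lq T).
Proof.
  intros hT. rewrite powerRZ_Rpower. reflexivity. unfold qT.
  pose proof (Rinv_0_lt_compat T hT); lra.
Qed.

Lemma jb_bounds T m : 0 < T -> IZR (jb T m) <= ln (INR m) / lq T < IZR (jb T m) + 1.
Proof. intros hT. unfold jb. pose proof (base_Int_part (ln (INR m) / lq T)). lra. Qed.

Lemma block_y T j m : 0 < T -> in_block T j m ->
  0 < INR m /\ IZR j <= ln (INR m) / lq T < IZR j + 1.
Proof.
  intros hT [h1 h2]. rewrite !pw in * by auto. pose proof (lq_pos T hT).
  pose proof (exp_pos (IZR j * lq T)).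
  assert (0 < INR m) by lra. split; auto.
  rewrite <- (exp_ln (INR m)) in h1, h2 by auto.
  apply exp_le_inv' in h1. apply exp_lt_inv' in h2. rewrite plus_IZR in h2.
  split.
  - apply Rmult_le_reg_r with (lq T); auto. unfold Rdiv. rewrite Rmult_assoc, Rinv_l by lra. lra.
  - apply Rmult_lt_reg_r with (lq T); auto. unfold Rdiv. rewrite Rmult_assoc, Rinv_l by lra. lra.
Qed.

Lemma block_jb T j m : 0 < T -> in_block T j m -> j = jb T m.
Proof.
  intros hT hb. destruct (block_y T j m hT hb) as [_ [h1 h2]].
  pose proof (jb_bounds T m hT) as [h3 h4].
  assert (IZR j < IZR (jb T m + 1)) by (rewrite plus_IZR; lra).
  assert (IZR (jb T m) < IZR (j + 1)) by (rewrite plus_IZR; lra).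
  apply lt_IZR in H. apply lt_IZR in H0. lia.
Qed.

Lemma jb_block T m : 0 < T -> 0 < INR m -> in_block T (jb T m) m.
Proof.
  intros hT hm. pose proof (jb_bounds T m hT) as [h1 h2]. pose proof (lq_pos T hT).
  unfold in_block. rewrite !pw by auto. rewrite <- (exp_ln (INR m)) at 1 2 by auto. rewrite plus_IZR.
  split.
  - destruct (Rle_lt_or_eq_dec _ _ h1) as [h|h].
    + left; apply exp_increasing. apply Rmult_lt_reg_r with (/ lq T). apply Rinv_0_lt_compat; auto.
      rewrite Rmult_assoc, Rinv_r by lra. lra.
    + right. f_equal. rewrite h. field. lra.
  - apply exp_increasing. apply Rmult_lt_reg_r with (/ lq T). apply Rinv_0_lt_compat; auto.
    rewrite Rmult_assoc, Rinv_r by lra. lra.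
Qed.

Lemma inM_pos gamma a N n : inM gamma a N n -> 0 < INR n.
Proof.
  intros [h _]. destruct n. unfold fM in h. simpl in h. lra. apply lt_0_INR; lia.
Qed.

Lemma inM'_pos gamma a N T m : inM' gamma a N T m -> 0 < INR m.
Proof. intros [h _]. eapply inM_pos; eauto. Qed.

Lemma jb_inj gamma a N T m m' : 0 < T -> inM' gamma a N T m -> inM' gamma a N T m' ->
  jb T m = jb T m' -> m = m'.
Proof.
  intros hT [hm [j [hj hmin]]] [hm' [j' [hj' hmin']]] e.
  pose proof (block_jb T j m hT hj). pose proof (block_jb T j' m' hT hj').
  subst. rewrite <- e in hj', hmin'.
  pose proof (hmin m' hm' hj'). pose proof (hmin' m hm hj). lia.
Qed.

Lemma window T j n : 0 < T -> 0 < INR n ->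
  powerRZ (qT T) (j - 1) <= INR n <= powerRZ (qT T) (j + 2) ->
  (jb T n - 2 <= j <= jb T n + 1)%Z.
Proof.
  intros hT hn [h1 h2]. pose proof (jb_block T n hT hn) as [h3 h4].
  pose proof (lq_pos T hT).
  rewrite !pw in * by auto.
  assert (a1 : IZR (j - 1) * lq T < IZR (jb T n + 1) * lq T) by (apply exp_lt_inv'; lra).
  assert (a2 : IZR (jb T n) * lq T <= IZR (j + 2) * lq T) by (apply exp_le_inv'; lra).
  apply Rmult_lt_reg_r in a1; auto. apply Rmult_le_reg_r in a2; auto.
  apply lt_IZR in a1. apply le_IZR in a2. lia.
Qed.

Lemma spacing T m m' : 0 < T -> 0 < INR m -> 0 < INR m' ->
  (Rabs (IZR (jb T m) - IZR (jb T m')) - 1) * lq T <= Rabs (ln (INR m) - ln (INR m')).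
Proof.
  intros hT hm hm'. pose proof (jb_bounds T m hT). pose proof (jb_bounds T m' hT).
  pose proof (lq_pos T hT).
  set (y := ln (INR m) / lq T) in *. set (y' := ln (INR m') / lq T) in *.
  replace (ln (INR m) - ln (INR m')) with ((y - y') * lq T) by (unfold y, y'; field; lra).
  rewrite Rabs_mult, (Rabs_pos_eq (lq T)) by lra.
  apply Rmult_le_compat_r; [lra|].
  unfold Rabs; repeat destruct Rcase_abs; lra.
Qed.

Definition Kr T m m' := 320*PI / (1 + (IZR (jb T m) - IZR (jb T m'))^2).
Definition Wd T A := 2*((T+1) + A*(T+1)^2/T^2) * Phi (A/T).

Lemma range_jb T B : exists K : nat, forall m, (m <= B)%nat -> (- Z.of_nat K <= jb T m <= Z.of_nat K)%Z.
Proof.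
  induction B.
  - exists (Z.to_nat (Z.abs (jb T 0))). intros m hm. replace m with 0%nat by lia. lia.
  - destruct IHB as [K hK]. exists (max K (Z.to_nat (Z.abs (jb T (S B))))).
    intros m hm. destruct (Nat.eq_dec m (S B)) as [->|hne]. lia.
    specialize (hK m ltac:(lia)). lia.
Qed.

Lemma row_bd gamma a N T B m : 0 < T ->
  sum_f_R0 (fun m' => ind (inM' gamma a N T m') * Kr T m m') B <= 320*PI*6.
Proof.
  intros hT. destruct (range_jb T B) as [K hK]. pose proof PI_RGT_0.
  eapply Rle_trans.
  apply (count_inj B (inM' gamma a N T) (jb T) (- Z.of_nat K) (2*K) (fun k => 320*PI/(1 + (IZR (jb T m) - IZR k)^2))).
  - intros m0 hm0 _. specialize (hK m0 hm0). lia.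
  - intros; eapply (jb_inj gamma a N T); eauto.
  - intros k. left; apply Rdiv_lt_0_compat. nra. pose proof (pow2_ge_0 (IZR (jb T m) - IZR k)). lra.
  - apply Rle_trans with (320*PI * sum_f_R0 (fun i => 1 / (1 + IZR ((- Z.of_nat K - jb T m) + Z.of_nat i) ^ 2)) (2*K)).
    + right. rewrite scal_sum. apply sum_eq. intros i _.
      rewrite !plus_IZR, !minus_IZR, !opp_IZR. field.
      set (u := IZR (Z.of_nat K)). set (v := IZR (Z.of_nat i)). set (w := IZR (jb T m)). pose proof (pow2_ge_0 (- u - w + v)); lra.
    + apply Rmult_le_compat_l. nra. apply tele_sum.
Qed.

Lemma sq_abs x : x ^ 2 = Rabs x ^ 2.
Proof. unfold Rabs; destruct Rcase_abs; ring. Qed.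

Lemma Wd_nonneg T A : 0 < T -> 0 <= A -> 0 <= Wd T A.
Proof.
  intros hT hA. unfold Wd. pose proof (Phi_pos (A/T)).
  assert (0 <= A * (T+1)^2/T^2). { apply Rdiv_le_0_compat. apply Rmult_le_pos; nra. nra. }
  apply Rmult_le_pos; nra.
Qed.

Lemma pair_bd T A m m' : 1 <= T -> 1 <= A -> 0 < INR m -> 0 < INR m' ->
  Rabs (RInt (gk T (ln (INR m) - ln (INR m'))) (-A) A) <= T * Kr T m m' + Wd T A.
Proof.
  intros hT hA hm hm'.
  pose proof (Wd_nonneg T A ltac:(lra) ltac:(lra)) as hW. pose proof PI_RGT_0 as hpi.
  set (D := IZR (jb T m) - IZR (jb T m')).
  assert (eK : Kr T m m' * (1 + D^2) = 320 * PI).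
  { unfold Kr. fold D. field. pose proof (pow2_ge_0 D); lra. }
  pose proof (pow2_ge_0 D).
  destruct (Rle_or_lt (D^2) 1) as [hD|hD].
  - pose proof (int_triv T (ln (INR m) - ln (INR m')) A ltac:(lra) ltac:(lra)).
    assert (hKp : 0 < Kr T m m') by (unfold Kr; apply Rdiv_lt_0_compat; fold D; nra).
    assert (hK160 : 160*PI <= Kr T m m') by nra.
    nra.
  - assert (hd : 2 <= Rabs D).
    { assert (eDz : D = IZR (jb T m - jb T m')) by (unfold D; rewrite minus_IZR; ring).
      rewrite eDz in *. set (z := (jb T m - jb T m')%Z) in *.
      destruct (Z_le_gt_dec 2 z) as [h|h].
      - apply IZR_le in h. rewrite Rabs_pos_eq; lra.
      - destruct (Z_le_gt_dec z (-2)) as [h'|h'].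
        + apply IZR_le in h'. rewrite Rabs_left; lra.
        + exfalso. assert (-1 <= IZR z <= 1) by (split; apply IZR_le; lia). nra. }
    set (x := ln (INR m) - ln (INR m')).
    pose proof (spacing T m m' ltac:(lra) hm hm') as hsp. fold D x in hsp.
    pose proof (lq_lb T ltac:(lra)) as hlq.
    set (d := Rabs D) in *. set (ax := Rabs x) in *.
    assert (hax : (d - 1) / (T+1) <= ax).
    { apply Rle_trans with ((d-1) * lq T); auto. unfold Rdiv. apply Rmult_le_compat_l; lra. }
    assert (hax1 : 1/(T+1) <= ax).
    { apply Rle_trans with ((d - 1) / (T+1)); auto. apply Rmult_le_compat_r. left; apply Rinv_0_lt_compat; lra. lra. }
    assert (hax0 : 0 < ax). { assert (0 < 1/(T+1)) by (apply Rdiv_lt_0_compat; lra). lra. }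
    assert (hx : x <> 0). { intro e. unfold ax in hax0. rewrite e, Rabs_R0 in hax0. lra. }
    pose proof (int_ibp T x A ltac:(lra) ltac:(lra) hx) as hI. fold ax in hI.
    set (y := / ax).
    assert (hy : 0 < y) by (apply Rinv_0_lt_compat; auto).
    assert (exy : y * ax = 1) by (unfold y; field; lra).
    assert (h1 : y * (d - 1) <= T + 1).
    { apply Rmult_le_compat_l with (r := y * (T+1)) in hax; [|nra].
      replace (y * (T + 1) * ((d - 1) / (T + 1))) with (y * (d-1)) in hax by (field; lra). nra. }
    assert (hyT : y <= T + 1).
    { apply Rmult_le_compat_l with (r := y * (T+1)) in hax1; [|nra].
      replace (y * (T + 1) * (1 / (T + 1))) with y in hax1 by (field; lra). nra. }
    assert (ex2 : x ^ 2 = ax ^ 2) by apply sq_abs.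
    assert (eD2 : D ^ 2 = d ^ 2) by apply sq_abs.
    assert (e1 : 16 * PI / (T * x ^ 2) = 16 * PI * y^2 / T) by (rewrite ex2; unfold y; field; lra).
    assert (e2 : A / (T ^ 2 * x ^ 2) = A * y^2 / T^2) by (rewrite ex2; unfold y; field; lra).
    rewrite e1, e2 in hI.
    assert (h2 : y^2 * (d-1)^2 <= 4 * T^2).
    { assert (0 <= y*(d-1)) by nra.
      assert ((y*(d-1))^2 <= (T+1)^2) by (apply pow_incr; lra). nra. }
    assert (h3 : y^2 * (1 + d^2) <= 20 * T^2).
    { assert (1 + d^2 <= 5 * (d-1)^2) by nra. assert (0 <= y^2) by nra.
      assert (y^2 * (1+d^2) <= y^2 * (5 * (d-1)^2)) by (apply Rmult_le_compat_l; lra). nra. }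
    assert (t1 : 16 * PI * y ^ 2 / T <= T * Kr T m m').
    { apply Rmult_le_reg_r with (T * (1 + d^2)). nra.
      replace (16 * PI * y ^ 2 / T * (T * (1 + d ^ 2))) with (16 * PI * (y^2 * (1 + d^2))) by (field; lra).
      replace (T * Kr T m m' * (T * (1 + d ^ 2))) with (T^2 * (Kr T m m' * (1 + D^2))) by (rewrite eD2; ring).
      rewrite eK. nra. }
    assert (t2 : 2 * ((y + A * y ^ 2 / T ^ 2) * Phi (A / T)) <= Wd T A).
    { unfold Wd. pose proof (Phi_pos (A/T)).
      assert (y^2 <= (T+1)^2) by nra.
      assert (A * y ^ 2 / T ^ 2 <= A * (T + 1) ^ 2 / T ^ 2).
      { unfold Rdiv. apply Rmult_le_compat_r. left; apply Rinv_0_lt_compat; nra. nra. }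
      nra. }
    change (/ ax) with y in hI. lra.
Qed.

Definition Win T m n := exists j : Z, in_block T j m /\
            powerRZ (qT T) (j - 1) <= INR n <= powerRZ (qT T) (j + 2).

Lemma count_win gamma a N T n : 0 < T -> inM gamma a N n ->
  sum_f_R0 (fun m => ind (inM' gamma a N T m /\ Win T m n)) (Bnd gamma N) <= 4.
Proof.
  intros hT hn. pose proof (inM_pos _ _ _ _ hn) as hnp.
  apply Rle_trans with (sum_f_R0 (fun m => ind (inM' gamma a N T m /\ Win T m n) * (fun _ : Z => 1) (jb T m)) (Bnd gamma N)).
  { right. apply sum_eq; intros; simpl; ring. }
  eapply Rle_trans.
  apply (count_inj (Bnd gamma N) (fun m => inM' gamma a N T m /\ Win T m n) (jb T) (jb T n - 2) 3 (fun _ => 1)).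
  - intros m _ [hm [j [hb hw]]]. pose proof (block_jb T j m hT hb). subst j.
    pose proof (window T (jb T m) n hT hnp hw). simpl. lia.
  - intros m m' _ _ [h1 _] [h2 _] e. eapply (jb_inj gamma a N T); eauto.
  - intros; lra.
  - simpl. lra.
Qed.

Lemma c2_bd gamma a N T : 0 < T ->
  sum_f_R0 (fun m => (ind (inM' gamma a N T m) * rr gamma a N T m)^2) (Bnd gamma N)
  <= 4 * sumM gamma a N (fun n => fM gamma N n ^ 2).
Proof.
  intros hT. set (B := Bnd gamma N).
  assert (e1 : forall m, (ind (inM' gamma a N T m) * rr gamma a N T m)^2 =
     sum_f_R0 (fun n => ind (inM' gamma a N T m) * (ind (inM gamma a N n) * (ind (Win T m n) * fM gamma N n ^ 2))) B).
  { intros m.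
    transitivity (ind (inM' gamma a N T m) * sumM gamma a N (fun n => ind (Win T m n) * fM gamma N n ^ 2)).
    { unfold rr. rewrite Rpow_mult_distr. rewrite pow2_sqrt.
      - replace (ind (inM' gamma a N T m) ^ 2) with (ind (inM' gamma a N T m)) by (simpl; rewrite Rmult_1_r, ind_sq; auto).
        reflexivity.
      - unfold sumM. apply sum_nonneg; intros. apply Rmult_le_pos. apply ind_ge0. apply Rmult_le_pos. apply ind_ge0. apply pow2_ge_0. }
    unfold sumM. fold B. rewrite scal_sum. apply sum_eq; intros. ring. }
  rewrite (sum_eq _ _ _ (fun m _ => e1 m)).
  rewrite sum_swap.
  unfold sumM. fold B. rewrite scal_sum.
  apply sum_Rle. intros n hn.
  apply Rle_trans with (ind (inM gamma a N n) * fM gamma N n ^ 2 * sum_f_R0 (fun m => ind (inM' gamma a N T m /\ Win T m n)) B).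
  { right. rewrite scal_sum. apply sum_eq; intros m _. rewrite <- ind_and. ring. }
  destruct (classic (inM gamma a N n)) as [h|h].
  - rewrite (ind_T _ h). pose proof (count_win gamma a N T n hT h). fold B in H.
    pose proof (pow2_ge_0 (fM gamma N n)). nra.
  - rewrite (ind_F _ h). lra.
Qed.

Lemma Wd_bd T A : 1 <= T -> 1 <= A -> Wd T A * A <= 32*T^4*((T+1) + (T+1)^2/T^2).
Proof.
  intros hT hA. unfold Wd. set (u := A/T). pose proof (Phi_bd u). pose proof (Phi_pos u).
  assert (hu : A = u * T) by (unfold u; field; lra).
  assert (h4 : u^4 * Phi u <= 16).
  { assert (u^4 <= (1+u^2)*(1+u^2)) by nra. nra. }
  assert (hA4 : A^4 * Phi u <= 16 * T^4).
  { rewrite hu. replace ((u*T)^4 * Phi u) with (T^4 * (u^4 * Phi u)) by ring.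
    assert (0 < T^4) by (apply pow_lt; lra). nra. }
  set (k := (T+1)^2/T^2). assert (0 <= k) by (unfold k; apply Rdiv_le_0_compat; nra).
  replace (A * (T + 1) ^ 2 / T ^ 2) with (A * k) by (unfold k; field; lra).
  assert (A <= A^2) by nra. assert (A^2 <= A^4) by (replace (A^4) with (A^2*A^2) by ring; nra). assert (A <= A^4) by lra.
  assert (e : 2 * (T + 1 + A * k) * Phi u * A = 2 * ((T+1) * (A * Phi u) + k * (A^2 * Phi u))) by ring.
  rewrite e.
  assert (A * Phi u <= A^4 * Phi u) by nra.
  assert (A^2 * Phi u <= A^4 * Phi u) by nra.
  assert ((T+1) * (A * Phi u) <= (T+1) * (16 * T^4)) by nra.
  assert (k * (A^2 * Phi u) <= k * (16 * T^4)) by nra.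
  nra.
Qed.

Definition cc gamma a N T m := ind (inM' gamma a N T m) * rr gamma a N T m.
Definition ll m := ln (INR m).

Lemma h_eq gamma a kappa T t :
  integrand gamma a kappa T t =
  sum_f_R0 (fun m => sum_f_R0 (fun m' => cc gamma a (Nof kappa T) T m * cc gamma a (Nof kappa T) T m' *
     gk T (ll m - ll m') t) (Bnd gamma (Nof kappa T))) (Bnd gamma (Nof kappa T)).
Proof.
  unfold integrand.
  assert (e : Rsum gamma a (Nof kappa T) T t = sum_n (fun m => Cmult (RtoC (cc gamma a (Nof kappa T) T m)) (cos (t * ll m), - sin (t * ll m))%R) (Bnd gamma (Nof kappa T))) by reflexivity.
  rewrite e, E_gen. rewrite Rmult_comm, scal_sum. apply sum_eq; intros m _.
  rewrite Rmult_comm, scal_sum. apply sum_eq; intros m' _. unfold gk. ring.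
Qed.

Lemma h_int gamma a kappa T a' b' : 0 < T ->
  is_RInt (integrand gamma a kappa T) a' b'
   (sum_f_R0 (fun m => sum_f_R0 (fun m' => cc gamma a (Nof kappa T) T m * cc gamma a (Nof kappa T) T m' *
     RInt (gk T (ll m - ll m')) a' b') (Bnd gamma (Nof kappa T))) (Bnd gamma (Nof kappa T))).
Proof.
  intros hT.
  eapply is_RInt_ext. intros t _. symmetry. apply h_eq.
  apply (is_RInt_sum (fun m t => sum_f_R0 (fun m' => cc gamma a (Nof kappa T) T m * cc gamma a (Nof kappa T) T m' *
     gk T (ll m - ll m') t) (Bnd gamma (Nof kappa T)))).
  intros m _.
  apply (is_RInt_sum (fun m' t => cc gamma a (Nof kappa T) T m * cc gamma a (Nof kappa T) T m' * gk T (ll m - ll m') t)).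
  intros m' _.
  apply (is_RInt_scal (V:=R_NormedModule) (gk T (ll m - ll m'))).
  apply (RInt_correct (V:=R_CompleteNormedModule)). apply gk_ex; auto.
Qed.

Lemma dsum_lin (f g : nat -> nat -> R) (al be : R) n :
  sum_f_R0 (fun i => sum_f_R0 (fun j => f i j * al + g i j * be) n) n =
  al * sum_f_R0 (fun i => sum_f_R0 (fun j => f i j) n) n + be * sum_f_R0 (fun i => sum_f_R0 (fun j => g i j) n) n.
Proof.
  rewrite !scal_sum, <- sum_plus. apply sum_eq; intros i _.
  rewrite Rmult_comm, (Rmult_comm (sum_f_R0 _ n) be), !scal_sum, <- sum_plus. reflexivity.
Qed.

Theorem lemma5 (gamma a kappa : R)
  (hg : 0 < gamma < 1) (ha : 1 < a < / gamma) (hk : 0 < kappa <= 1) :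
  exists C : R, 0 < C /\
  exists T0 : R, forall T : R, T0 <= T ->
    exists I : R,
      is_RInt_gen (integrand gamma a kappa T)
        (Rbar_locally m_infty) (Rbar_locally p_infty) I /\
      I <= C * T * sumM gamma a (Nof kappa T) (fun n => fM gamma (Nof kappa T) n ^ 2).
Proof.
  exists (7680*PI). split. pose proof PI_RGT_0; lra.
  exists 1. intros T hT.
  assert (hTp : 0 < T) by lra.
  assert (hpos : forall t, 0 <= integrand gamma a kappa T t).
  { intros t. unfold integrand. apply Rmult_le_pos. apply pow2_ge_0. left; apply Phi_pos. }
  assert (hex : forall a' b', ex_RInt (integrand gamma a kappa T) a' b').
  { intros. eexists. apply h_int; auto. }
  set (N := Nof kappa T) in *.
  set (B := Bnd gamma N).
  set (c := cc gamma a N T).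
  set (Sf := sumM gamma a N (fun n => fM gamma N n ^ 2)).
  assert (hc0 : forall m, 0 <= c m). { intros; unfold c, cc. apply Rmult_le_pos; [apply ind_ge0|apply sqrt_pos]. }
  set (S1 := sum_f_R0 c B).
  set (Wc := 32*T^4*((T+1) + (T+1)^2/T^2)).
  assert (key : forall A, 1 <= A -> RInt (integrand gamma a kappa T) (-A) A <= 7680*PI*T*Sf + Wd T A * (S1*S1)).
  { intros A hA.
    rewrite (is_RInt_unique _ _ _ _ (h_int gamma a kappa T (-A) A hTp)). fold N B c.
    apply Rle_trans with (sum_f_R0 (fun m => sum_f_R0 (fun m' => c m * c m' * Kr T m m' * T + c m * c m' * Wd T A) B) B).
    { apply sum_Rle; intros m hm; apply sum_Rle; intros m' hm'.
      pose proof (hc0 m). pose proof (hc0 m').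
      destruct (classic (inM' gamma a N T m)) as [h1|h1]; [destruct (classic (inM' gamma a N T m')) as [h2|h2]|].
      - pose proof (pair_bd T A m m' hT hA (inM'_pos _ _ _ _ _ h1) (inM'_pos _ _ _ _ _ h2)) as hp.
        fold (ll m) (ll m') in hp.
        pose proof (Rle_abs (RInt (gk T (ll m - ll m')) (- A) A)).
        assert (0 <= c m * c m') by nra.
        assert (c m * c m' * RInt (gk T (ll m - ll m')) (- A) A <= c m * c m' * (T * Kr T m m' + Wd T A)) by (apply Rmult_le_compat_l; lra).
        nra.
      - assert (c m' = 0) by (unfold c, cc; rewrite (ind_F _ h2); ring). rewrite H1. lra.
      - assert (c m = 0) by (unfold c, cc; rewrite (ind_F _ h1); ring). rewrite H1. lra. }
    rewrite (dsum_lin (fun m m' => c m * c m' * Kr T m m') (fun m m' => c m * c m') T (Wd T A) B).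
    assert (hs : sum_f_R0 (fun m => sum_f_R0 (fun m' => c m * c m' * Kr T m m') B) B <= 320*PI*6 * sum_f_R0 (fun m => c m ^ 2) B).
    { apply (schur B (inM' gamma a N T)).
      - intros m hm. unfold c, cc. rewrite (ind_F _ hm). ring.
      - intros. unfold Kr. left. apply Rdiv_lt_0_compat. pose proof PI_RGT_0; lra.
        pose proof (pow2_ge_0 (IZR (jb T m) - IZR (jb T m'))); lra.
      - intros. unfold Kr. f_equal. f_equal. ring.
      - intros. apply row_bd; auto. }
    assert (h2 : sum_f_R0 (fun m => c m ^ 2) B <= 4 * Sf) by (apply (c2_bd gamma a N T hTp)).
    assert (h3 : sum_f_R0 (fun m => sum_f_R0 (fun m' => c m * c m') B) B = S1 * S1) by (unfold S1; rewrite prod_sum; reflexivity).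
    rewrite h3.
    pose proof PI_RGT_0.
    assert (0 <= sum_f_R0 (fun m => c m ^ 2) B) by (apply sum_nonneg; intros; apply pow2_ge_0).
    set (X := sum_f_R0 (fun m => sum_f_R0 (fun m' => c m * c m' * Kr T m m') B) B) in *.
    assert (320*PI*6 * sum_f_R0 (fun m => c m ^ 2) B <= 320*PI*6*(4*Sf)) by (apply Rmult_le_compat_l; lra).
    assert (T * X <= T * (320*PI*6*(4*Sf))) by (apply Rmult_le_compat_l; lra).
    lra. }
  apply mono_lim; auto.
  intros a' b' hab.
  apply Rnot_lt_le. intro hlt.
  set (Y := 7680 * PI * T * Sf) in *.
  set (del := RInt (integrand gamma a kappa T) a' b' - Y).
  assert (hdel : 0 < del) by (unfold del; lra).
  assert (hWc : 0 <= Wc * (S1 * S1)).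
  { unfold Wc. apply Rmult_le_pos; [|nra].
    apply Rmult_le_pos. assert (0 < T^4) by (apply pow_lt; lra). lra.
    assert (0 <= (T+1)^2/T^2) by (apply Rdiv_le_0_compat; nra). lra. }
  set (A := Rmax (Rmax 1 (Rmax (Rabs a') (Rabs b'))) (Wc * (S1 * S1) / del + 1)).
  assert (hA1 : 1 <= A) by (unfold A; eapply Rle_trans; [|apply Rmax_l]; apply Rmax_l).
  assert (hAa : Rmax (Rabs a') (Rabs b') <= A) by (unfold A; eapply Rle_trans; [|apply Rmax_l]; apply Rmax_r).
  assert (hAd : Wc * (S1 * S1) / del + 1 <= A) by (unfold A; apply Rmax_r).
  assert (ha1 : - A <= a') by (pose proof (Rmax_l (Rabs a') (Rabs b')); pose proof (Rle_abs (-a')); rewrite Rabs_Ropp in *; lra).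
  assert (hb1 : b' <= A) by (pose proof (Rmax_r (Rabs a') (Rabs b')); pose proof (Rle_abs b'); lra).
  assert (hsub : RInt (integrand gamma a kappa T) a' b' <= RInt (integrand gamma a kappa T) (-A) A).
  { rewrite <- (RInt_Chasles (integrand gamma a kappa T) (-A) a' A (hex _ _) (hex _ _)).
    rewrite <- (RInt_Chasles (integrand gamma a kappa T) a' b' A (hex _ _) (hex _ _)).
    assert (0 <= RInt (integrand gamma a kappa T) (-A) a') by (apply RInt_ge_0; auto).
    assert (0 <= RInt (integrand gamma a kappa T) b' A) by (apply RInt_ge_0; auto).
    change (RInt (integrand gamma a kappa T) a' b' <= RInt (integrand gamma a kappa T) (-A) a' + (RInt (integrand gamma a kappa T) a' b' + RInt (integrand gamma a kappa T) b' A)). lra. }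
  pose proof (key A hA1) as hk1.
  pose proof (Wd_bd T A hT hA1) as hw. fold Wc in hw.
  assert (hWd : Wd T A * (S1 * S1) * A <= Wc * (S1 * S1)).
  { replace (Wd T A * (S1 * S1) * A) with (Wd T A * A * (S1*S1)) by ring. apply Rmult_le_compat_r; nra. }
  assert (hAd2 : Wc * (S1 * S1) < del * A).
  { assert (Wc * (S1 * S1) / del < A) by lra.
    apply (Rmult_lt_compat_l del) in H; auto. replace (del * (Wc * (S1 * S1) / del)) with (Wc * (S1*S1)) in H by (field; lra). lra. }
  assert (Wd T A * (S1 * S1) < del) by nra.
  unfold del in *. lra.
Qed.
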